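(* Let $\|\cdot\|$ be a norm on $\mathbb{R}^d$ and let $\mathcal{X}\subseteq\mathbb{R}^d$ be closed and convex. Let $S,S_1,\dots,S_n$ be i.i.d. random variables with sample space $\mathcal{S}$, let $f:\mathcal{X}\times\mathcal{S}\to\mathbb{R}$ be convex in its first argument, write $f_i(x)=f(x;S_i)$, $F(x)=\mathbb{E}[f(x;S)]$ and $\bar F(x)=\frac1n\sum_{i=1}^n f_i(x)$. Suppose that $f$ is $L$-Lipschitz and $F$ is $\mu$-strongly convex (with $\mu>0$), and let $F^\star=\min_{x\in\mathcal{X}}F(x)$. Let $x_0,x_1,\dots,x_K\in\mathcal{X}$ be fixed candidate points (not depending on $S_1,\dots,S_n$) and let $k_{\mathrm{greedy}}\in\arg\min_{k\in\{0,1,\dots,K\}}\bar F(x_k)$. Then for all $\delta\in(0,1)$, with probability at least $1-\delta$, \[ F(x_{k_{\mathrm{greedy}}})-F^\star\le 2\max\left\{\min_{k\in\{0,\dots,K\}}F(x_k)-F^\star,\ \frac{32L^2}{\mu n}\ln\frac{2K}{\delta}\right\}. \]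
   Context: $f$ is $L$-Lipschitz means that almost surely $|f(x;S)-f(x';S)|\le L\|x-x'\|$ for all $x,x'\in\mathcal{X}$. $F$ is $\mu$-strongly convex (w.r.t. $\|\cdot\|$) means $F(u)\ge F(v)+g\cdot(u-v)+\frac{\mu}{2}\|u-v\|^2$ for all $u,v\in\mathcal{X}$ and subgradients $g$ of $F$ at $v$. The candidate points are a finite set of models among which one is selected using the validation samples $f_1,\dots,f_n$. *)

(* Defs.v *)
From HB Require Import structures.
From mathcomp Require Import all_boot all_order all_algebra.
From mathcomp Require Import all_classical all_reals all_analysis.
Set Implicit Arguments. Unset Strict Implicit. Unset Printing Implicit Defensive.
Import Order.TTheory GRing.Theory Num.Theory.
Import numFieldNormedType.Exports.
Local Open Scope classical_set_scope.
Local Open Scope ring_scope.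

Definition is_norm (R : realType) (d : nat) (nrm : 'rV[R]_d -> R) : Prop :=
  (forall x, nrm x = 0 -> x = 0) /\
  (forall (a : R) x, nrm (a *: x) = `|a| * nrm x) /\
  (forall x y, nrm (x + y) <= nrm x + nrm y).

Definition dotv (R : realType) (d : nat) (g v : 'rV[R]_d) : R :=
  \sum_(i < d) g 0 i * v 0 i.

Definition convex_subset (R : realType) (d : nat) (X : set 'rV[R]_d) : Prop :=
  forall x y (t : R), X x -> X y -> 0 <= t <= 1 ->
    X (t *: x + (1 - t) *: y).

Definition convex_fun_on (R : realType) (d : nat) (X : set 'rV[R]_d)
  (g : 'rV[R]_d -> R) : Prop :=
  forall x y (t : R), X x -> X y -> 0 <= t <= 1 ->
    g (t *: x + (1 - t) *: y) <= t * g x + (1 - t) * g y.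

Definition subgradient (R : realType) (d : nat) (X : set 'rV[R]_d)
  (F : 'rV[R]_d -> R) (v g : 'rV[R]_d) : Prop :=
  forall u, X u -> F v + dotv g (u - v) <= F u.

Definition strongly_convex_on (R : realType) (d : nat) (nrm : 'rV[R]_d -> R)
  (X : set 'rV[R]_d) (F : 'rV[R]_d -> R) (mu : R) : Prop :=
  forall u v g, X u -> X v -> subgradient X F v g ->
    F v + dotv g (u - v) + mu / 2 * nrm (u - v) ^+ 2 <= F u.

Definition mutually_independent (R : realType) (d0 : measure_display)
  (Omega : measurableType d0) (P : probability Omega R)
  (dS : measure_display) (Sp : measurableType dS) (I : finType)
  (Y : I -> Omega -> Sp) : Prop :=
  forall (J : {set I}) (A : I -> set Sp), (forall i, measurable (A i)) ->
    P (\bigcap_(i in [set i | i \in J]) (Y i @^-1` A i)) =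
    ((\prod_(i in J) fine (P (Y i @^-1` A i)))%R)%:E.

Definition identically_distributed (R : realType) (d0 : measure_display)
  (Omega : measurableType d0) (P : probability Omega R)
  (dS : measure_display) (Sp : measurableType dS)
  (Y Z : Omega -> Sp) : Prop :=
  forall A : set Sp, measurable A -> P (Y @^-1` A) = P (Z @^-1` A).

Definition iid_family (R : realType) (d0 : measure_display)
  (Omega : measurableType d0) (P : probability Omega R)
  (dS : measure_display) (Sp : measurableType dS) (n : nat)
  (S : Omega -> Sp) (Ss : 'I_n -> Omega -> Sp) : Prop :=
  let Y := fun o : option 'I_n => match o with None => S | Some i => Ss i end in
  (forall o, measurable_fun setT (Y o)) /\
  mutually_independent P Y /\
  (forall o, identically_distributed P (Y o) S).

Definition almost_surely_law (R : realType) (d0 : measure_display)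
  (Omega : measurableType d0) (P : probability Omega R)
  (dS : measure_display) (Sp : measurableType dS)
  (S : Omega -> Sp) (Q : Sp -> Prop) : Prop :=
  exists N : set Sp, [/\ measurable N, P (S @^-1` N) = 0%E &
                         forall s, ~ N s -> Q s].

Definition pop_risk (R : realType) (d0 : measure_display)
  (Omega : measurableType d0) (P : probability Omega R)
  (dS : measure_display) (Sp : measurableType dS) (d : nat)
  (f : 'rV[R]_d -> Sp -> R) (S : Omega -> Sp) (x : 'rV[R]_d) : R :=
  Rintegral P setT (fun w => f x (S w)).

Definition emp_risk (R : realType) (d0 : measure_display)
  (Omega : measurableType d0)
  (dS : measure_display) (Sp : measurableType dS) (d n : nat)
  (f : 'rV[R]_d -> Sp -> R) (Ss : 'I_n -> Omega -> Sp) (w : Omega)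
  (x : 'rV[R]_d) : R :=
  n%:R^-1 * \sum_(i < n) f x (Ss i w).

(* Main.v *)
Require Import Defs.
From HB Require Import structures.
From mathcomp Require Import all_boot all_order all_algebra.
From mathcomp Require Import all_classical all_reals all_analysis.
From mathcomp Require Import measurable_realfun ring lra.
Import Order.TTheory GRing.Theory Num.Theory.
Import numFieldNormedType.Exports.
Local Open Scope classical_set_scope.
Local Open Scope ring_scope.
Lemma expR_convex {R : realType} (t a b : R) : 0 <= t <= 1 ->
  expR (t * a + (1 - t) * b) <= t * expR a + (1 - t) * expR b.
Proof.
case/andP=> t0 t1.
have := @convex_expR R (Itv01 t0 t1) a b.
by rewrite !convRE /=.
Qed.
Lemma expR_chord {R : realType} (c y : R) : 0 < c -> -c <= y <= c ->
  expR y <= (c + y) / (2 * c) * expR c + (c - y) / (2 * c) * expR (- c).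
Proof.
move=> c0 /andP[y1 y2].
have t01 : 0 <= (c + y) / (2 * c) <= 1.
  apply/andP; split; first by apply: divr_ge0; lra.
  by rewrite ler_pdivrMr; lra.
have := @expR_convex _ _ c (- c) t01.
have -> : (c + y) / (2 * c) * c + (1 - (c + y) / (2 * c)) * - c = y.
  by field; lra.
have -> : 1 - (c + y) / (2 * c) = (c - y) / (2 * c) by field; lra.
by [].
Qed.

Lemma chernoff_fin (R : realType) (J : finType) (n : nat) (p v : J -> R) (A D : R) :
  (forall j, 0 <= p j) -> \sum_j p j <= 1 -> (forall j, - A <= v j <= A) ->
  \sum_j p j * v j <= - D -> 0 < D < A ->
  \sum_(t : {ffun 'I_n -> J} | 0 <= \sum_i v (t i)) \prod_i p (t i)
    <= expR (- (n%:R * (D / A) ^+ 2 / 2)).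
Proof.
move=> p0 sp1 vA mv /andP[D0 DA].
have A0 : 0 < A by lra.
set q := D / A.
have q0 : 0 < q by apply: divr_gt0.
have q1 : q < 1 by rewrite ltr_pdivrMr // mul1r.
set rho := (1 + q) / (1 - q).
have rho1 : 1 < rho by rewrite ltr_pdivlMr; lra.
set E := Num.sqrt rho.
have E2 : E ^+ 2 = rho by rewrite sqr_sqrtr //; lra.
have E1 : 1 < E by rewrite -sqrtr1 ltr_sqrt; lra.
set lam := ln E / A.
have lam0 : 0 < lam by apply: divr_gt0 => //; apply: ln_gt0.
have eE : expR (lam * A) = E by rewrite /lam mulfVK ?gt_eqF // lnK // posrE; lra.
set g := (E + E^-1) / 2 - q * (E - E^-1) / 2.
have step1 : \sum_j p j * expR (lam * v j) <= g.
  apply: (@le_trans _ _ (\sum_j p j * ((E + E^-1) / 2 + (E - E^-1) / (2 * A) * v j))).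
    apply: ler_sum => j _; apply: ler_wpM2l => //.
    have lA : 0 < lam * A by apply: mulr_gt0.
    have := vA j => /andP[v1 v2].
    have := @expR_chord _ (lam * A) (lam * v j) lA.
    rewrite expRN eE.
    have -> : (lam * A + lam * v j) / (2 * (lam * A)) = (A + v j) / (2 * A).
      by field; apply/andP; split; lra.
    have -> : (lam * A - lam * v j) / (2 * (lam * A)) = (A - v j) / (2 * A).
      by field; apply/andP; split; lra.
    move=> H; apply: (le_trans (H _)).
      by apply/andP; split; rewrite -?mulrN; apply: ler_wpM2l; lra.
    have Ei : 0 < E^-1 by rewrite invr_gt0; lra.
    rewrite le_eqVlt; apply/orP; left; apply/eqP; field; lra.
  rewrite (eq_bigr (fun j => (E + E^-1) / 2 * p j + (E - E^-1) / (2 * A) * (p j * v j))); last first.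
    by move=> j _; ring.
  rewrite big_split /= -!mulr_sumr.
  have Ei : 0 < E^-1 by rewrite invr_gt0; lra.
  have EEi : E^-1 < 1 by rewrite invf_lt1 //; lra.
  have b0 : 0 <= (E - E^-1) / (2 * A) by apply: divr_ge0; lra.
  have : (E - E^-1) / (2 * A) * (\sum_j p j * v j) <= (E - E^-1) / (2 * A) * (- D).
    by apply: ler_wpM2l.
  have : (E + E^-1) / 2 * (\sum_j p j) <= (E + E^-1) / 2 * 1.
    by apply: ler_wpM2l => //; apply: divr_ge0; lra.
  have -> : (E - E^-1) / (2 * A) * (- D) = - q * (E - E^-1) / 2.
    by rewrite /q; field; lra.
  rewrite /g; lra.
have gE : g = (1 + q) / E.
  rewrite /g; apply: (@mulIf _ E); first by apply/eqP => /eqP; lra.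
  rewrite mulfVK; last by apply/eqP => /eqP; lra.
  have -> : ((E + E^-1) / 2 - q * (E - E^-1) / 2) * E = ((1 - q) * E ^+ 2 + (1 + q)) / 2.
    by field; lra.
  rewrite E2 /rho; field; lra.
have g0 : 0 <= g by rewrite gE; apply: divr_ge0; lra.
have g2 : g ^+ 2 = 1 - q ^+ 2.
  rewrite gE expr_div_n E2 /rho; field; lra.
have gle : g <= expR (- (q ^+ 2 / 2)).
  have : g ^+ 2 <= expR (- (q ^+ 2 / 2)) ^+ 2.
    rewrite -expRM_natr g2.
    have := expR_ge1Dx (- q ^+ 2).
    have -> : - (q ^+ 2 / 2) * 2%:R = - q ^+ 2 by field.
    lra.
  by rewrite ler_pXn2r // ?nnegrE // expR_ge0.
apply: (@le_trans _ _ (\sum_(t : {ffun 'I_n -> J}) \prod_i (p (t i) * expR (lam * v (t i))))).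
  rewrite [leRHS](bigID (fun t : {ffun 'I_n -> J} => 0 <= \sum_i v (t i))) /=.
  rewrite -[leLHS]addr0; apply: lerD.
    apply: ler_sum => t vt.
    rewrite big_split /= -expR_sum -mulr_sumr.
    rewrite -[leLHS]mulr1; apply: ler_wpM2l.
      by apply: prodr_ge0 => i _.
    by rewrite -expR0 ler_expR; apply: mulr_ge0 => //; lra.
  apply: sumr_ge0 => t _; apply: prodr_ge0 => i _; apply: mulr_ge0 => //; exact: expR_ge0.
rewrite -(bigA_distr_bigA (fun (i : 'I_n) j => p j * expR (lam * v j))) /=.
rewrite prodr_const card_ord.
apply: (@le_trans _ _ (g ^+ n)).
  apply: lerXn2r => //.
  by rewrite nnegrE; apply: sumr_ge0 => j _; apply: mulr_ge0 => //; exact: expR_ge0.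
apply: (@le_trans _ _ (expR (- (q ^+ 2 / 2)) ^+ n)).
  by apply: lerXn2r => //; rewrite nnegrE // expR_ge0.
rewrite -expRM_natr.
have -> : - (q ^+ 2 / 2) * n%:R = - (n%:R * q ^+ 2 / 2) by ring.
by [].
Qed.
Lemma measure_bigU_le {d} {T : measurableType d} {R : realType}
  (mu : {measure set T -> \bar R}) (I : finType) (Pr : pred I) (F : I -> set T) :
  (forall i, measurable (F i)) ->
  (mu (\big[setU/set0]_(i | Pr i) F i) <= \sum_(i | Pr i) mu (F i))%E.
Proof.
move=> mF.
suff : measurable (\big[setU/set0]_(i | Pr i) F i) /\
  (mu (\big[setU/set0]_(i | Pr i) F i) <= \sum_(i | Pr i) mu (F i))%E by case.
apply: (big_ind2 (fun U s => measurable U /\ (mu U <= s)%E)).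
- by split => //; rewrite measure0.
- move=> U1 s1 U2 s2 [mU1 h1] [mU2 h2]; split; first exact: measurableU.
  apply: (le_trans (measureU2 mu mU1 mU2)); exact: leeD.
- by move=> i _; split.
Qed.

Lemma Rint_simple {d} {T : measurableType d} {R : realType} (P : probability T R)
  (J : finType) (B : J -> set T) (w : J -> R) :
  (forall j, measurable (B j)) ->
  P.-integrable setT (fun x => (\sum_j w j * \1_(B j) x)%:E) /\
  \int[P]_(x in setT) (\sum_j w j * \1_(B j) x) = \sum_j w j * fine (P (B j)).
Proof.
move=> mB.
have eF : (fun x => (\sum_j w j * \1_(B j) x)%:E) =
          (fun x => \sum_j (w j)%:E * (\1_(B j) x)%:E)%E.
  by apply: funext => x; rewrite -sumEFin; apply: eq_bigr => j _; rewrite EFinM.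
have hi : forall j, P.-integrable setT (fun x => ((w j)%:E * (\1_(B j) x)%:E)%E).
  by move=> j; apply: integrableZl => //; exact: integrable_indic.
split.
  by rewrite eF; apply: integrable_sum.
rewrite /Rintegral.
have -> : (fun x => (\sum_j w j * \1_(B j) x)%:E) =
          (fun x => \sum_j (w j)%:E * (\1_(B j) x)%:E)%E by exact: eF.
rewrite integral_sum //.
rewrite (eq_bigr (fun j => ((w j)%:E * P (B j))%E)); last first.
  by move=> j _; rewrite integralZl // ?integral_indic // ?setIT //; exact: integrable_indic.
rewrite -sum_fine; last by move=> j _; rewrite fin_numM // fin_num_measure.
by apply: eq_bigr => j _; rewrite fineM // fin_num_measure.
Qed.
Lemma bounded_by {T : Type} {R : realType} (A : set T) (f : T -> R) (M : R) :
  (forall x, A x -> `|f x| <= M) -> [bounded f x | x in A].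
Proof.
move=> H; rewrite /bounded_near; near=> M' => x Ax /=.
apply: le_trans (H x Ax) _.
near: M'; apply: nbhs_pinfty_ge; exact: num_real.
Unshelve. all: end_near.
Qed.

Lemma int_bounded {d} {T : measurableType d} {R : realType} (P : probability T R)
  (g : T -> R) (M : R) : measurable_fun setT g -> (forall x, `|g x| <= M) ->
  P.-integrable setT (fun x => (g x)%:E).
Proof.
move=> mg gM; apply: (measurable_bounded_integrable _ _ mg) => //.
  by apply: (le_lt_trans (probability_le1 _ measurableT)); rewrite ltry.
by apply: (@bounded_by _ _ _ _ M) => x _; exact: gM.
Qed.
Lemma arith1 {R : realType} (n : nat) (a D : R) : 0 < D -> D <= a ->
  n%:R * D ^+ 2 / (9 / 4 * a ^+ 2) <= n%:R * ((D - D / 100) / (a + D / 100)) ^+ 2 / 2.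
Proof.
move=> D0 Da.
have a0' : 0 < a by lra.
set r := D / a.
have r0 : 0 < r by apply: divr_gt0.
have r1 : r <= 1 by rewrite ler_pdivrMr // mul1r.
have Dr : D = r * a by rewrite /r mulfVK // gt_eqF.
have ae0 : 0 < a + D / 100 by lra.
have key : (99/101) * r <= (D - D / 100) / (a + D / 100).
  rewrite ler_pdivlMr // Dr; nra.
set q := (D - D / 100) / (a + D / 100) in key *.
have -> : n%:R * D ^+ 2 / (9 / 4 * a ^+ 2) = n%:R * (4/9 * r^+2).
  by rewrite Dr; field; lra.
rewrite -[leRHS]mulrA; apply: ler_wpM2l; first exact: ler0n.
nra.
Qed.

Lemma hoeffding_iid {R : realType} {d0 : measure_display} {Omega : measurableType d0}
  (P : probability Omega R) {dS : measure_display} {Sp : measurableType dS}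
  (n : nat) (S : Omega -> Sp) (Ss : 'I_n -> Omega -> Sp) (h : Sp -> R)
  (a D : R) (N : set Sp) :
  iid_family P S Ss -> measurable_fun setT h -> measurable N ->
  P (S @^-1` N) = 0%E ->
  (forall s, ~ N s -> `|h s| <= a) ->
  P.-integrable setT (fun w => (h (S w))%:E) ->
  \int[P]_(w in setT) h (S w) = - D -> 0 < D ->
  D <= a /\ (P [set w | (0 <= \sum_i h (Ss i w))%R] <=
     (expR (- (n%:R * D ^+ 2 / (9 / 4 * a ^+ 2))))%:E)%E.
Proof.
move=> [mY [indep idd]] mh mN PN hN ih hD D0.
set Y := fun o : option 'I_n => match o with None => S | Some i => Ss i end.
have mS : measurable_fun setT S by exact: (mY None).
have mSs : forall i, measurable_fun setT (Ss i) by move=> i; exact: (mY (Some i)).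
have idS : forall i, identically_distributed P (Ss i) S by move=> i; exact: (idd (Some i)).
have mpre : forall (Z : Omega -> Sp) (B : set Sp), measurable_fun setT Z ->
    measurable B -> measurable (Z @^-1` B).
  by move=> Z B mZ mB; rewrite -[_ @^-1` _]setTI; exact: mZ.
have a0 : 0 <= a.
  have [s0 Ns0] : exists s, ~ N s.
    apply: contrapT => hall.
    have eN : S @^-1` N = setT.
      apply/seteqP; split => // w _ /=; apply: contrapT => Nw; apply: hall; by exists (S w).
    by move: PN; rewrite eN probability_setT => /eqP; rewrite onee_eq0.
  exact: le_trans (normr_ge0 _) (hN s0 Ns0).
set c := fun s => Num.min a (Num.max (- a) (h s)).
have mc : measurable_fun setT c.
  apply: (@measurable_minr _ _ _ _ (cst a) (fun s => Num.max (- a) (h s))) => //.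
  exact: (@measurable_maxr _ _ _ _ (cst (- a)) h).
have cb : forall s, - a <= c s <= a.
  move=> s; rewrite /c; apply/andP; split.
    by rewrite le_min; apply/andP; split; [lra | rewrite le_max lexx].
  by rewrite ge_min lexx.
have ch : forall s, ~ N s -> c s = h s.
  move=> s /hN; rewrite ler_norml => /andP[h1 h2].
  by rewrite /c (max_r h1) (min_r h2).
have icS : P.-integrable setT (fun w => (c (S w))%:E).
  apply: (@int_bounded _ _ _ P _ a); first exact: measurableT_comp.
  by move=> w; rewrite ler_norml; exact: cb.
have cD : \int[P]_(w in setT) c (S w) = - D.
  rewrite -hD /Rintegral; congr fine.
  apply: ae_eq_integral => //.
  - by apply/measurable_EFinP; exact: measurableT_comp.
  - by apply/measurable_EFinP; exact: measurableT_comp.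
  exists (S @^-1` N); split => //; first exact: mpre.
  move=> w /= Hw; apply: contrapT => Nw; apply: Hw => _; by rewrite ch.
have P1 : P setT = 1%E by exact: probability_setT.
have icst : forall r : R, P.-integrable setT (fun _ => r%:E).
  by move=> r; apply: (@int_bounded _ _ _ P _ `|r|) => //; exact: measurable_cst.
have Da : D <= a.
  have : \int[P]_(w in setT) (- a) <= \int[P]_(w in setT) c (S w).
    apply: le_Rintegral; [by [] | exact: icst | exact: icS | ].
    by move=> w _; case/andP: (cb (S w)).
  rewrite cD Rintegral_cst //.
  rewrite (_ : fine _ = 1); last exact: (congr1 fine P1).
  by rewrite mulr1; lra.
set eps := D / 100.
have eps0 : 0 < eps by rewrite /eps; lra.
set g := fun s => (c s + a) / eps.
have g0 : forall s, 0 <= g s.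
  by move=> s; apply: divr_ge0; [case/andP: (cb s) => *; lra | lra].
set Mx := Num.truncn (2 * a / eps).
have gM : forall s, (Num.truncn (g s) <= Mx)%N.
  move=> s; apply: le_truncn; rewrite /g ler_pM2r ?invr_gt0 //.
  by case/andP: (cb s) => *; lra.
set io := fun s => (inord (Num.truncn (g s)) : 'I_Mx.+1).
have ioE : forall s, val (io s) = Num.truncn (g s).
  by move=> s; apply: inordK; rewrite ltnS.
set v := fun j : 'I_Mx.+1 => - a + eps * (val j).+1%:R.
have vge : forall s, c s <= v (io s).
  move=> s; rewrite /v ioE.
  have /andP[_ t2] := truncn_itv (g0 s).
  have : c s + a < eps * (Num.truncn (g s)).+1%:R.
    by rewrite -ltr_pdivrMl // mulrC.
  lra.
have vle : forall s, v (io s) <= c s + eps.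
  move=> s; rewrite /v ioE.
  have /andP[t1 _] := truncn_itv (g0 s).
  have : eps * (Num.truncn (g s))%:R <= c s + a.
    by rewrite -ler_pdivlMl // mulrC.
  rewrite -addn1 natrD mulrDr mulr1; lra.
have vA : forall j, - (a + eps) <= v j <= a + eps.
  move=> j; rewrite /v; apply/andP; split.
    have : 0 <= eps * (val j).+1%:R by apply: mulr_ge0; [lra | exact: ler0n].
    lra.
  have jM : (val j <= Mx)%N by rewrite -ltnS ltn_ord.
  have jM' : ((val j)%:R : R) <= Mx%:R by rewrite ler_nat.
  have /andP[t1 _] := truncn_itv (x := 2 * a / eps) (divr_ge0 (mulr_ge0 (ler0n _ 2) a0) (ltW eps0)).
  rewrite -/Mx in t1.
  have : eps * (val j)%:R <= 2 * a.
    by rewrite -ler_pdivlMl // mulrC; lra.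
  have -> : ((val j).+1%:R : R) = (val j)%:R + 1 by rewrite -natr1.
  rewrite mulrDr mulr1; lra.
have mg : measurable_fun setT g.
  rewrite /g; apply: (@measurable_funM _ _ _ _ (fun s => c s + a) (cst eps^-1)).
    by apply: (@measurable_funD _ _ _ _ c (cst a)) => //.
  exact: measurable_cst.
set Aj := fun j : 'I_Mx.+1 => [set s | io s = j].
have mAj : forall j, measurable (Aj j).
  move=> j.
  have -> : Aj j = setT `&` g @^-1` `[(val j)%:R, (val j).+1%:R[.
    apply/seteqP; split => s /=.
      move=> <-; split => //; rewrite /= in_itv /= ioE.
      exact: truncn_itv (g0 s).
    move=> [_]; rewrite /= in_itv /= => Hs.
    apply: val_inj; rewrite /= ioE; apply/eqP.
    by rewrite truncn_eq // Hs.
  exact: mg.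
set B := fun j => S @^-1` Aj j.
have mB : forall j, measurable (B j) by move=> j; exact: mpre.
set p := fun j => fine (P (B j)).
have p0 : forall j, 0 <= p j by move=> j; apply: fine_ge0; exact: measure_ge0.
have sumind : forall (w : 'I_Mx.+1 -> R) x, \sum_j w j * \1_(B j) x = w (io (S x)).
  move=> w x; rewrite (bigD1 (io (S x))) //= big1 ?addr0.
    by rewrite indicE mem_set // mulr1.
  move=> j jn; rewrite indicE memNset ?mulr0 //.
  by rewrite /B /Aj /= => e; move: jn; rewrite e eqxx.
have sp1 : \sum_j p j <= 1.
  have [_ I1] := @Rint_simple _ _ _ P _ B (fun _ => 1) mB.
  have e1 : \sum_j 1 * fine (P (B j)) = \sum_j p j by apply: eq_bigr => j _; rewrite mul1r.
  rewrite -e1 -I1.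
  under eq_Rintegral => x _ do rewrite sumind.
  rewrite Rintegral_cst // (_ : fine _ = 1) ?mul1r //.
  exact: (congr1 fine P1).
have mean : \sum_j p j * v j <= - (D - eps).
  have [iv Iv] := @Rint_simple _ _ _ P _ B v mB.
  have -> : \sum_j p j * v j = \sum_j v j * p j by apply: eq_bigr => j _; rewrite mulrC.
  rewrite -Iv.
  have icS2 : P.-integrable setT (fun w => (c (S w) + eps)%:E).
    apply: (@int_bounded _ _ _ P _ (a + eps)).
      by apply: (@measurable_funD _ _ _ _ (c \o S) (cst eps)) => //; exact: measurableT_comp.
    by move=> w; rewrite ler_norml; case/andP: (cb (S w)) => *; apply/andP; split; lra.
  apply: (@le_trans _ _ (\int[P]_(w in setT) (c (S w) + eps))).
    apply: le_Rintegral => //.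
    by move=> w _; rewrite sumind; exact: vle.
  rewrite RintegralD //; last exact: icst.
  rewrite cD Rintegral_cst // (_ : fine _ = 1); last exact: (congr1 fine P1).
  by rewrite mulr1; lra.
set E0 := [set w | (0 <= \sum_i h (Ss i w))%R].
set Aopt := fun (t : {ffun 'I_n -> 'I_Mx.+1}) (o : option 'I_n) =>
  match o with None => setT | Some i => Aj (t i) end.
have mAopt : forall t o, measurable (Aopt t o) by move=> t [i|] //=.
set Cyl := fun t => \bigcap_(o in [set o | o \in [set: option 'I_n]%SET]) (Y o @^-1` Aopt t o).
have mCyl : forall t, measurable (Cyl t).
  move=> t; apply: fin_bigcap_measurable; first exact: finite_finset.
  by move=> o _; apply: mpre; [case: o => [i|] /= | exact: mAopt].
set E1 := \big[setU/set0]_(t : {ffun 'I_n -> 'I_Mx.+1} | (0 <= \sum_i v (t i))%R) Cyl t.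
set Nu := \big[setU/set0]_(i : 'I_n) (Ss i @^-1` N).
have mE1 : measurable E1 by apply: bigsetU_measurable => t _.
have mNu : measurable Nu by apply: bigsetU_measurable => i _; exact: mpre.
have mE0 : measurable E0.
  have mf : measurable_fun setT (fun w => \sum_i h (Ss i w)).
    by apply: measurable_sum => i; exact: measurableT_comp.
  rewrite (_ : E0 = setT `&` (fun w => \sum_i h (Ss i w)) @^-1` `[0, +oo[).
    exact: mf.
  by apply/seteqP; split => w /=; rewrite in_itv /= andbT // => -[].
have sub : E0 `<=` E1 `|` Nu.
  move=> w /= E0w.
  case: (pselect (exists i, N (Ss i w))) => [[i Ni]|nN].
    by right; rewrite /Nu (bigD1 i) //=; left.
  left; set t := [ffun i => io (Ss i w)].
  have tpos : (0 <= \sum_i v (t i))%R.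
    apply: (le_trans E0w); apply: ler_sum => i _; rewrite ffunE.
    rewrite -ch; first exact: vge.
    by move=> Ni; apply: nN; exists i.
  rewrite /E1 (bigD1 t) //=; left.
  move=> o _; case: o => [i|] //=.
  by rewrite /Aj /= ffunE.
have PNu : (P Nu <= 0)%E.
  have := measure_bigU_le P _ xpredT (fun i => Ss i @^-1` N) (fun i => mpre _ _ (mSs i) mN).
  move=> H; apply: (le_trans H).
  by rewrite big1 // => i _; exact: (etrans (idS i N mN) PN).
have PCyl : forall t, P (Cyl t) = (\prod_i p (t i))%:E.
  move=> t; have H := indep [set: option 'I_n]%SET (Aopt t) (mAopt t).
  apply: (etrans H); congr EFin.
  rewrite (eq_bigl xpredT); last by move=> o; exact: finset.in_setT.
  rewrite (bigD1 None) //=.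
  rewrite (_ : fine _ = 1); last first.
    by rewrite preimage_setT; exact: (congr1 fine P1).
  rewrite mul1r (reindex_omap Some id) //=; last by case.
  rewrite (eq_bigl xpredT); last by move=> i; rewrite eqxx.
  apply: eq_bigr => i _.
  by rewrite /p /B; congr fine; exact: (idS i _ (mAj (t i))).
have PE1 : (P E1 <= (\sum_(t : {ffun 'I_n -> 'I_Mx.+1} | (0 <= \sum_i v (t i))%R)
                        \prod_i p (t i))%:E)%E.
  apply: (le_trans (measure_bigU_le P _ _ Cyl mCyl)).
  rewrite -sumEFin; apply: lee_sum => t _.
  by rewrite le_eqVlt; apply/orP; left; apply/eqP; exact: PCyl.
have ch1 := @chernoff_fin R 'I_Mx.+1 n p v (a + eps) (D - eps) p0 sp1 vA mean.
have ch2 : 0 < D - eps < a + eps by apply/andP; split; rewrite /eps; lra.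
have := ch1 ch2 => {}ch1.
split => //.
apply: (le_trans (le_measure P (mem_set mE0) (mem_set (measurableU _ _ mE1 mNu)) sub)).
apply: (le_trans (measureU2 P mE1 mNu)).
apply: (@le_trans _ _ ((\sum_(t : {ffun 'I_n -> 'I_Mx.+1} | (0 <= \sum_i v (t i))%R)
                        \prod_i p (t i))%:E + 0)%E).
  exact: leeD.
rewrite adde0 lee_fin; apply: (le_trans ch1).
rewrite ler_expR lerN2.
exact: arith1.
Qed.
Lemma arith2 {R : realType} (N K mu L delta Dk Db r rk rb : R) :
  0 < N -> 1 <= K -> 0 < mu -> 0 < delta < 1 -> 0 <= Db ->
  2 * Num.max Db (32 * L ^+ 2 / (mu * N) * ln (2 * K / delta)) < Dk ->
  0 <= rk -> 0 <= rb -> 0 <= r -> r <= rb + rk ->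
  mu / 2 * rk ^+ 2 <= Dk -> mu / 2 * rb ^+ 2 <= Db ->
  Dk - Db <= L * r ->
  expR (- (N * (Dk - Db) ^+ 2 / (9 / 4 * (L * r) ^+ 2))) <= delta / K.
Proof.
move=> N0 K1 mu0 /andP[d0 d1] Db0 bad rk0 rb0 r0 rr hk hb Da.
set l := ln (2 * K / delta).
set c := 32 * L ^+ 2 / (mu * N) * l.
have l0 : 0 <= l.
  apply: ln_ge0; rewrite ler_pdivlMr //; lra.
have bad1 : 2 * Db < Dk by apply: le_lt_trans bad; rewrite ler_pM2l // le_max lexx.
have bad2 : 2 * c < Dk by apply: le_lt_trans bad; rewrite ler_pM2l // le_max lexx orbT.
have Dk0 : 0 < Dk by lra.
have D0 : 0 < Dk - Db by lra.
have a0 : 0 < L * r by lra.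
have r0' : 0 < r.
  rewrite lt_neqAle r0 andbT; apply/eqP => r0e; move: a0; rewrite -r0e mulr0; lra.
have L0 : L != 0 by apply/eqP => L0; move: a0; rewrite L0 mul0r; lra.
have L20 : 0 < L ^+ 2 by rewrite lt_neqAle sqr_ge0 andbT eq_sym sqrf_eq0.
set yk := Num.sqrt Dk.
set yb := Num.sqrt Db.
set m := Num.sqrt (mu / 2).
have yk0 : 0 <= yk := sqrtr_ge0 _.
have yb0 : 0 <= yb := sqrtr_ge0 _.
have m0 : 0 <= m := sqrtr_ge0 _.
have yk2 : yk ^+ 2 = Dk by rewrite sqr_sqrtr //; lra.
have yb2 : yb ^+ 2 = Db by rewrite sqr_sqrtr.
have m2 : m ^+ 2 = mu / 2 by rewrite sqr_sqrtr //; lra.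
have mk : m * rk <= yk.
  rewrite -(ler_pXn2r (n:=2)) // ?nnegrE ?mulr_ge0 // exprMn m2 yk2; lra.
have mb : m * rb <= yb.
  rewrite -(ler_pXn2r (n:=2)) // ?nnegrE ?mulr_ge0 // exprMn m2 yb2; lra.
have ybk : yb <= 71 / 100 * yk.
  rewrite -(ler_pXn2r (n:=2)) // ?nnegrE ?mulr_ge0 // exprMn yb2 yk2; lra.
have mr : m * r <= yk + yb.
  have : m * r <= m * (rb + rk) by apply: ler_wpM2l.
  lra.
have eD : Dk - Db = (yk - yb) * (yk + yb) by rewrite -yk2 -yb2; ring.
have D1 : 29 / 100 * yk * (m * r) <= Dk - Db.
  rewrite eD.
  have h1 : 29 / 100 * yk <= yk - yb by lra.
  have h2 : 0 <= m * r by apply: mulr_ge0.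
  apply: (le_trans (y := (yk - yb) * (m * r))).
    by apply: ler_wpM2r.
  by apply: ler_wpM2l; lra.
have D2 : 1 / 25 * mu * Dk * r ^+ 2 <= (Dk - Db) ^+ 2.
  have h0 : 0 <= 29 / 100 * yk * (m * r) by apply: mulr_ge0; [apply: mulr_ge0; lra | apply: mulr_ge0].
  have sq : (29 / 100 * yk * (m * r)) ^+ 2 <= (Dk - Db) ^+ 2.
    by rewrite ler_pXn2r // nnegrE // ltW.
  have e0 : (29 / 100 * yk * (m * r)) ^+ 2 = 841 / 10000 * yk ^+ 2 * m ^+ 2 * r ^+ 2.
    by rewrite !exprMn; field.
  rewrite e0 yk2 m2 in sq.
  apply: le_trans sq.
  have : 0 <= mu * Dk * r ^+ 2 by apply: mulr_ge0; [apply: mulr_ge0; lra | exact: sqr_ge0].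
  lra.
have hc : 64 * L ^+ 2 * l < mu * N * Dk.
  have muN : 0 < mu * N by apply: mulr_gt0.
  have e : 2 * c * (mu * N) = 64 * L ^+ 2 * l.
    by rewrite /c; field; rewrite (gt_eqF N0) (gt_eqF mu0).
  by rewrite -e [X in _ < X]mulrC ltr_pM2r.
have lx : l <= N * (Dk - Db) ^+ 2 / (9 / 4 * (L * r) ^+ 2).
  have den : 0 < 9 / 4 * (L * r) ^+ 2 by apply: mulr_gt0 => //; exact: exprn_gt0.
  rewrite ler_pdivlMr //.
  apply: (le_trans (y := N * (1 / 25 * mu * Dk * r ^+ 2))); last by apply: ler_wpM2l => //; lra.
  have r20 : 0 < r ^+ 2 by exact: exprn_gt0.
  have : (1 / 25 * r ^+ 2) * (64 * L ^+ 2 * l) <= (1 / 25 * r ^+ 2) * (mu * N * Dk).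
    by apply: ler_wpM2l; [apply: mulr_ge0; lra | exact: ltW].
  have : 0 <= L ^+ 2 * r ^+ 2 * l by apply: mulr_ge0 => //; apply: mulr_ge0; exact: ltW.
  rewrite exprMn.
  move=> h1 h2.
  have e1 : N * (1 / 25 * mu * Dk * r ^+ 2) = (1 / 25 * r ^+ 2) * (mu * N * Dk) by ring.
  have e2 : 1 / 25 * r ^+ 2 * (64 * L ^+ 2 * l) = 64 / 25 * (L ^+ 2 * r ^+ 2 * l) by ring.
  have e3 : l * (9 / 4 * (L ^+ 2 * r ^+ 2)) = 9 / 4 * (L ^+ 2 * r ^+ 2 * l) by ring.
  rewrite e1 e3; rewrite e2 in h2; lra.
apply: (le_trans (y := expR (- l))); first by rewrite ler_expR lerN2.
have K0 : 0 < K by lra.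
have q0 : 0 < 2 * K / delta by apply: divr_gt0 => //; lra.
rewrite expRN /l lnK ?posrE //.
rewrite invf_div ler_pdivrMr; last by apply: mulr_gt0 => //; lra.
have -> : delta / K * (2 * K) = 2 * delta by field; apply/eqP => /eqP; lra.
lra.
Qed.
Lemma divnat_le {R : realType} (K : nat) (delta : R) : 0 <= delta ->
  delta / K%:R * K%:R <= delta.
Proof.
case: K => [|K] d0; first by rewrite mulr0.
by rewrite mulfVK // pnatr_eq0.
Qed.

Lemma sum_bad_le {R : realType} (K : nat) (delta : R) (b : 'I_K.+1) (bad : pred 'I_K.+1) :
  0 <= delta -> ~~ bad b ->
  \sum_(k | bad k) (delta / K%:R) <= delta.
Proof.
move=> d0 nb.
have dK : 0 <= delta / K%:R by apply: divr_ge0.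
apply: (le_trans (y := \sum_(k | k != b) (delta / K%:R))).
  rewrite [leLHS]big_mkcond [leRHS]big_mkcond /=; apply: ler_sum => k _.
  case: ifP => bk; last by case: ifP.
  have kb : k != b by apply/eqP => e; move: nb; rewrite -e bk.
  by rewrite kb.
have e : \sum_(k | k != b) (delta / K%:R) = delta / K%:R * K%:R.
  have e0 : \sum_(k < K.+1) (delta / K%:R) = delta / K%:R + \sum_(k | k != b) (delta / K%:R).
    by rewrite (bigD1 b).
  rewrite sumr_const card_ord mulrSr -[(delta / K%:R) *+ K]mulr_natr in e0.
  by apply: (addrI (delta / K%:R)); rewrite -e0 addrC.
by rewrite e; exact: divnat_le.
Qed.
Theorem proposition1
  (R : realType) (d : nat) (nrm : 'rV[R]_d -> R) (X : set 'rV[R]_d)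
  (d0 : measure_display) (Omega : measurableType d0) (P : probability Omega R)
  (dS : measure_display) (Sp : measurableType dS) (n : nat)
  (S : Omega -> Sp) (Ss : 'I_n -> Omega -> Sp)
  (f : 'rV[R]_d -> Sp -> R) (L mu : R)
  (xstar : 'rV[R]_d) (K : nat) (x : 'I_K.+1 -> 'rV[R]_d) (delta : R) :
  is_norm nrm ->
  closed X -> convex_subset X ->
  (0 < n)%N ->
  iid_family P S Ss ->
  (forall s, convex_fun_on X (fun y => f y s)) ->
  (forall y, X y -> measurable_fun setT (f y)) ->
  (forall y, X y -> P.-integrable setT (fun w => (f y (S w))%:E)) ->
  almost_surely_law P S (fun s => forall y y', X y -> X y' ->
     `|f y s - f y' s| <= L * nrm (y - y')) ->
  0 < mu ->
  strongly_convex_on nrm X (pop_risk P f S) mu ->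
  X xstar -> (forall y, X y -> pop_risk P f S xstar <= pop_risk P f S y) ->
  (forall k, X (x k)) ->
  0 < delta < 1 ->
  ((1 - delta)%:E <=
   P [set w | (forall kg : 'I_K.+1,
        (forall k, emp_risk f Ss w (x kg) <= emp_risk f Ss w (x k)) ->
        pop_risk P f S (x kg) - pop_risk P f S xstar <=
        2 * Num.max
          (\big[Num.min/pop_risk P f S (x ord0)]_(k < K.+1) pop_risk P f S (x k)
             - pop_risk P f S xstar)
          (32 * L ^+ 2 / (mu * n%:R) * ln (2 * K%:R / delta)))%R])%E.
Proof.
move=> [_ [nrmZ nrmD]] _ _ n0 iid _ fmeas fint [N [mN PN HN]] mu0 sc xsX xsmin xX
  /andP[dl0 dl1].
have nrm0 : nrm 0 = 0 by have := nrmZ 0 0; rewrite scale0r normr0 mul0r.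
have nrmN : forall v, nrm (- v) = nrm v.
  by move=> v; rewrite -scaleN1r nrmZ normrN normr1 mul1r.
have nrm_ge0 : forall v, 0 <= nrm v.
  move=> v; have := nrmD v (- v); rewrite subrr nrm0 nrmN; lra.
set F := pop_risk P f S.
have sc0 : forall u, X u -> mu / 2 * nrm (u - xstar) ^+ 2 <= F u - F xstar.
  move=> u Xu.
  have sg : subgradient X F xstar 0.
    move=> w Xw; rewrite /dotv big1 ?addr0; first exact: xsmin.
    by move=> i _; rewrite mxE mul0r.
  have := sc u xstar 0 Xu xsX sg.
  rewrite /dotv big1 ?addr0; last by move=> i _; rewrite mxE mul0r.
  rewrite /F; lra.
have [b bE] : exists b, \big[Num.min/F (x ord0)]_(k < K.+1) F (x k) = F (x b).
  apply: (big_ind (fun m => exists b, m = F (x b))).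
  - by exists ord0.
  - move=> u v [bu ->] [bv ->]; case: (leP (F (x bu)) (F (x bv))) => h.
      by exists bu.
    by exists bv.
  - by move=> k _; exists k.
have bmin : forall k, F (x b) <= F (x k).
  by move=> k; rewrite -bE (bigD1 k) //= ge_min lexx.
rewrite bE.
set Fs := F xstar.
set c := 32 * L ^+ 2 / (mu * n%:R) * ln (2 * K%:R / delta).
set bad := fun k : 'I_K.+1 => 2 * Num.max (F (x b) - Fs) c < F (x k) - Fs.
have Db0 : 0 <= F (x b) - Fs by rewrite subr_ge0; exact: xsmin.
have nbb : ~~ bad b.
  rewrite /bad -leNgt; apply: (le_trans (y := 2 * (F (x b) - Fs))); first lra.
  by rewrite ler_pM2l // le_max lexx.
set E0 := fun k : 'I_K.+1 => [set w | (0 <= \sum_i (f (x b) (Ss i w) - f (x k) (Ss i w)))%R].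
have [mY _] := iid.
have mE0 : forall k, measurable (E0 k).
  move=> k.
  have mf : measurable_fun setT (fun w => \sum_i (f (x b) (Ss i w) - f (x k) (Ss i w))).
    apply: measurable_sum => i.
    exact: (measurableT_comp (f := fun s => f (x b) s - f (x k) s) (g := Ss i)
      (@measurable_funB _ _ _ _ (f (x b)) (f (x k)) (fmeas _ (xX b)) (fmeas _ (xX k)))
      (mY (Some i))).
  rewrite (_ : E0 k = setT `&` (fun w => \sum_i (f (x b) (Ss i w) - f (x k) (Ss i w))) @^-1` `[0, +oo[).
    exact: mf.
  by apply/seteqP; split => w /=; rewrite in_itv /= andbT // => -[].
have PE0 : forall k, bad k -> (P (E0 k) <= (delta / K%:R)%:E)%E.
  move=> k bk.
  have kb : k != b by apply/eqP => e; move: nbb; rewrite -e bk.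
  have K1 : (1 <= K)%N.
    rewrite lt0n; apply/eqP => K0.
    have hk : (val k <= 0)%N.
      by apply: (leq_trans (n := K)); [rewrite -ltnS ltn_ord | rewrite K0].
    have hb : (val b <= 0)%N.
      by apply: (leq_trans (n := K)); [rewrite -ltnS ltn_ord | rewrite K0].
    move: hk hb; rewrite !leqn0 => /eqP hk /eqP hb.
    by move: kb; rewrite (_ : k = b) ?eqxx //; apply: val_inj; rewrite /= hb hk.
  set hk := fun s => f (x b) s - f (x k) s.
  have mhk : measurable_fun setT hk.
    exact: (@measurable_funB _ _ _ _ (f (x b)) (f (x k)) (fmeas _ (xX b)) (fmeas _ (xX k))).
  have hN : forall s, ~ N s -> `|hk s| <= L * nrm (x b - x k).
    by move=> s Ns; exact: (HN s Ns (x b) (x k) (xX b) (xX k)).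
  have ihk : P.-integrable setT (fun w => (hk (S w))%:E).
    have -> : (fun w => (hk (S w))%:E) = (fun w => (f (x b) (S w))%:E - (f (x k) (S w))%:E)%E.
      by apply: funext => w; rewrite /hk EFinB.
    by apply: integrableB => //; exact: fint.
  have mhS : \int[P]_(w in setT) hk (S w) = - (F (x k) - F (x b)).
    rewrite /hk RintegralB //; [|exact: fint|exact: fint].
    by rewrite /F /pop_risk opprB.
  have Dk0 : 0 < F (x k) - F (x b).
    have : 2 * (F (x b) - Fs) <= 2 * Num.max (F (x b) - Fs) c by rewrite ler_pM2l // le_max lexx.
    rewrite /bad in bk; lra.
  have [Da Pk] := @hoeffding_iid R d0 Omega P dS Sp n S Ss hk (L * nrm (x b - x k)) (F (x k) - F (x b)) N iid mhk mN PN hN ihk mhS Dk0.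
  apply: (le_trans Pk); rewrite lee_fin.
  have rr : nrm (x b - x k) <= nrm (x b - xstar) + nrm (x k - xstar).
    have -> : x b - x k = (x b - xstar) + - (x k - xstar) by rewrite opprB addrA subrK.
    by rewrite -(nrmN (x k - xstar)); exact: nrmD.
  have := @arith2 R n%:R K%:R mu L delta (F (x k) - Fs) (F (x b) - Fs)
    (nrm (x b - x k)) (nrm (x k - xstar)) (nrm (x b - xstar)).
  have -> : F (x k) - Fs - (F (x b) - Fs) = F (x k) - F (x b) by ring.
  apply.
  - by rewrite ltr0n.
  - by rewrite ler1n.
  - by [].
  - by rewrite dl0 dl1.
  - by [].
  - by [].
  - exact: nrm_ge0.
  - exact: nrm_ge0.
  - exact: nrm_ge0.
  - exact: rr.
  - exact: sc0.
  - exact: sc0.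
  - by [].
set Ev := (X in (_ <= P X)%E).
set U := \big[setU/set0]_(k | bad k) E0 k.
have mU : measurable U by apply: bigsetU_measurable => k _.
have memp : forall k, measurable_fun setT (fun w => emp_risk f Ss w (x k)).
  move=> k; rewrite /emp_risk.
  apply: (@measurable_funM _ _ _ _ (cst n%:R^-1) (fun w => \sum_i f (x k) (Ss i w))).
    exact: measurable_cst.
  apply: measurable_sum => i.
  exact: (measurableT_comp (f := f (x k)) (g := Ss i) (fmeas _ (xX k)) (mY (Some i))).
have mEv : measurable Ev.
  have -> : Ev = \bigcap_(kg in [set kg | bad kg]) \bigcup_(k in [set: 'I_K.+1])
      [set w | emp_risk f Ss w (x k) < emp_risk f Ss w (x kg)].
    apply/seteqP; split => w /= Hw.
      move=> kg bkg; apply: contrapT => nex.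
      have : ~~ bad kg.
        rewrite /bad -leNgt; apply: Hw => k; rewrite leNgt; apply/negP => lt.
        by apply: nex; exists k.
      by rewrite bkg.
    move=> kg hmin; rewrite leNgt; apply/negP => bkg.
    have [k _ lt] := Hw kg bkg.
    by move: (hmin k); rewrite leNgt lt.
  apply: fin_bigcap_measurable; first exact: finite_finset.
  move=> kg _; apply: fin_bigcup_measurable; first exact: finite_finset.
  move=> k _.
  rewrite (_ : [set w | _] = setT `&` (fun w => emp_risk f Ss w (x kg) - emp_risk f Ss w (x k)) @^-1` `]0, +oo[).
    exact: (@measurable_funB _ _ _ _ _ _ (memp kg) (memp k)).
  by apply/seteqP; split => w /=; rewrite in_itv /= andbT subr_gt0 // => -[].
have sub : ~` U `<=` Ev.
  move=> w nU kg hmin; rewrite leNgt; apply/negP => bkg; apply: nU.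
  rewrite /U (bigD1 kg) //=; left; rewrite /E0 /=.
  have := hmin b; rewrite /emp_risk ler_pM2l ?invr_gt0 ?ltr0n // => hs.
  by rewrite sumrB subr_ge0.
have PU : (P U <= delta%:E)%E.
  apply: (le_trans (measure_bigU_le P _ bad E0 mE0)).
  apply: (@le_trans _ _ (\sum_(k | bad k) (delta / K%:R)%:E)%E).
    by apply: lee_sum => k bk; exact: PE0.
  by rewrite sumEFin lee_fin; exact: (@sum_bad_le R K delta b bad (ltW dl0) nbb).
have PC := @probability_setC _ _ _ P U mU.
have fU : P U \is a fin_num by rewrite fin_num_measure.
have h1 : ((1 - delta)%:E <= 1 - P U)%E.
  move: PU; rewrite -(fineK fU) lee_fin => PU'.
  by rewrite -EFinB lee_fin; lra.
apply: (le_trans h1); rewrite -PC.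
exact: (le_measure P (mem_set (measurableC mU)) (mem_set mEv) sub).
Qed.
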